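(* Let $\lambda$ be a nonzero real number, $x$ real, and $n\ge0$ an integer. Then $$\sum_{k=0}^{n}\beta_{k,\lambda}(x)\,S_{1,\lambda}(n,k)=n!\sum_{k=0}^{n}\binom{x}{k}\frac{\lambda^{n-k}(1)_{n-k+1,\frac{1}{\lambda}}}{(n-k+1)!}.$$
   Context: For real $y$, $\mu\neq 0$ and integer $k\ge0$: $(y)_{0,\mu}=1$, $(y)_{k,\mu}=y(y-\mu)\cdots(y-(k-1)\mu)$ (used with $\mu=\lambda$ and $\mu=1/\lambda$); $(y)_0=1$, $(y)_k=y(y-1)\cdots(y-k+1)$. The degenerate exponential is $e_\lambda^x(t)=\sum_{k\ge0}(x)_{k,\lambda}t^k/k!=(1+\lambda t)^{x/\lambda}$, $e_\lambda(t)=e^1_\lambda(t)$. The degenerate Bernoulli polynomials are defined by $\frac{t}{e_\lambda(t)-1}e_\lambda^x(t)=\sum_{n\ge0}\beta_{n,\lambda}(x)\frac{t^n}{n!}$. The degenerate Stirling numbers of the first kind are defined by $(x)_{n}=\sum_{k=0}^{n}S_{1,\lambda}(n,k)(x)_{k,\lambda}$ ($n\ge0$). *)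

(* Defs.v *)
From mathcomp Require Import all_boot all_order all_algebra.
From mathcomp Require Import reals.
Set Implicit Arguments. Unset Strict Implicit. Unset Printing Implicit Defensive.
Import Order.TTheory GRing.Theory Num.Theory.
Local Open Scope ring_scope.

(* generalized falling factorial (y)_{k,mu} = y (y - mu) ... (y - (k-1) mu) *)
Definition dfall {R : pzRingType} (y mu : R) (k : nat) : R :=
  \prod_(i < k) (y - i%:R * mu).

Definition fall {R : pzRingType} (y : R) (k : nat) : R :=
  \prod_(i < k) (y - i%:R).

(* coefficient of t^j in e_lambda(t) - 1 = sum_{j>=1} (1)_{j,lambda} t^j / j! *)
Definition em1_coef {R : fieldType} (lam : R) (j : nat) : R :=
  if j == 0%N then 0 else dfall 1 lam j / (j`!)%:R.

(* b is the sequence of degenerate Bernoulli polynomials beta_{n,lambda}(x):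
   the generating-function identity  t/(e_lambda(t)-1) e_lambda^x(t)
   = sum_n b n t^n/n!, read as an identity of formal power series in t,
   i.e. (sum_n b n t^n/n!) * (e_lambda(t) - 1) = t * e_lambda^x(t),
   compared coefficientwise (coefficient of t^n). *)
Definition degBernoulli_gf {R : fieldType} (lam x : R) (b : nat -> R) : Prop :=
  forall n : nat,
    \sum_(k < n.+1) (b k / (k`!)%:R) * em1_coef lam (n - k)
    = if n is m.+1 then dfall x lam m / (m`!)%:R else 0.

Definition degStirling1 {R : pzRingType} (lam : R) (S1 : nat -> nat -> R) : Prop :=
  forall (n : nat) (y : R), fall y n = \sum_(k < n.+1) S1 n k * dfall y lam k.

(* Main.v *)
Require Import Defs.
From mathcomp Require Import all_boot all_order all_algebra.
From mathcomp Require Import reals.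
From mathcomp Require Import ring lra.
Import Order.TTheory GRing.Theory Num.Theory.
Local Open Scope ring_scope.

Fixpoint Dd {R : realType} (m : nat) (f : R -> R) : R -> R :=
  match m with 0%N => f | m'.+1 => Dd m' (fun y => f (y + 1) - f y) end.

Lemma D_ext (R : realType) m (f g : R -> R) :
  (forall y, f y = g y) -> forall y, Dd m f y = Dd m g y.
Proof.
elim: m f g => [|m IH] f g H y /=; first exact: H.
by apply: IH => z; rewrite !H.
Qed.

Lemma D_add (R : realType) m (f g : R -> R) y :
  Dd m (fun z => f z + g z) y = Dd m f y + Dd m g y.
Proof.
elim: m f g y => [|m IH] f g y //=.
rewrite -IH; apply: D_ext => z; ring.
Qed.

Lemma D_lin (R : realType) m K (c : nat -> R) (F : nat -> R -> R) y :
  Dd m (fun z => \sum_(k < K) c k * F k z) y = \sum_(k < K) c k * Dd m (F k) y.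
Proof.
elim: m F y => [|m IH] F y //=.
rewrite -(IH (fun k z => F k (z + 1) - F k z)); apply: D_ext => z; rewrite -sumrB; apply: eq_bigr => k _; ring.
Qed.

Lemma D_scale (R : realType) m (c : R) (f : R -> R) y :
  Dd m (fun z => c * f z) y = c * Dd m f y.
Proof.
elim: m f y => [|m IH] f y //=.
rewrite -IH; apply: D_ext => z; ring.
Qed.

Lemma D_shift (R : realType) m (f : R -> R) y :
  Dd m (fun z => f (z + 1)) y = Dd m f (y + 1).
Proof. by elim: m f y => [|m IH] f y //=; rewrite -IH. Qed.

Lemma D_zero (R : realType) m y : Dd m (fun _ : R => 0) y = 0.
Proof.
elim: m y => [|m IH] y //=.
rewrite -(IH y); apply: D_ext => z; ring.
Qed.

Lemma D_const (R : realType) m (c : R) y : Dd m.+1 (fun _ : R => c) y = 0.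
Proof. rewrite /= -(D_zero _ m y); apply: D_ext => z; ring. Qed.

Lemma D_leib (R : realType) m (g : R -> R) (a y : R) :
  Dd m.+1 (fun z => g z * (z - a)) y
  = Dd m.+1 g y * (y - a) + m.+1%:R * Dd m g (y + 1).
Proof.
elim: m g y => [|m IH] g y; first by rewrite /=; ring.
have -> : Dd m.+2 (fun z => g z * (z - a)) y =
  Dd m.+1 (fun z => (g (z + 1) - g z) * (z - a) + g (z + 1)) y.
  by rewrite [LHS]/=; apply: D_ext => z; ring.
rewrite D_add IH D_shift.
rewrite [Dd m.+2 g y]/= [Dd m.+1 g (y + 1)]/=.
rewrite (mulrS (1 : R) m.+1) -/(m.+1%:R); ring.
Qed.
Definition pf {R : realType} (a : nat -> R) (N : nat) (y : R) : R := \prod_(i < N) (y - a i).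
Definition Cb {R : realType} (lam : R) (m : nat) : R := dfall lam 1 m / (m`!)%:R.

Lemma pfS (R : realType) (a : nat -> R) N y : pf a N.+1 y = pf a N y * (y - a N).
Proof. by rewrite /pf big_ord_recr. Qed.

Lemma D_high (R : realType) (a : nat -> R) N m y : (N < m)%N -> Dd m (pf a N) y = 0.
Proof.
elim: N m y => [|N IH] [|m] y //= Hm.
  rewrite -(D_const _ m 1 y) /=; apply: D_ext => z; by rewrite /pf !big_ord0.
have -> : Dd m (fun y0 => pf a N.+1 (y0 + 1) - pf a N.+1 y0) y =
   Dd m.+1 (fun z => pf a N z * (z - a N)) y by apply: D_ext => z; rewrite !pfS.
by rewrite D_leib !IH // ?mulr0 ?mul0r ?addr0 // ltnW.
Qed.

Lemma fact_neq0 (R : realType) n : (n`!)%:R != 0 :> R.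
Proof. by rewrite pnatr_eq0 -lt0n fact_gt0. Qed.

Lemma CbS (R : realType) (lam : R) m : Cb lam m.+1 * m.+1%:R = lam * Cb (lam - 1) m.
Proof.
rewrite /Cb /dfall big_ord_recl /= factS natrM.
have -> : \prod_(i < m) (lam - (bump 0 i)%:R * 1) = \prod_(i < m) (lam - 1 - i%:R * 1).
  by apply: eq_bigr => i _; rewrite /bump /= add1n mulr1 mulr1 -natr1; ring.
have := fact_neq0 R m; have : m.+1%:R != 0 :> R by rewrite pnatr_eq0.
move=> H1 H2; field; rewrite ?H1 ?H2 //=.
by rewrite -natr1 addrC in H1.
Qed.

Lemma Cb0 (R : realType) (lam : R) : Cb lam 0 = 1.
Proof. by rewrite /Cb /dfall big_ord0 fact0 divr1. Qed.

Lemma newton (R : realType) (a : nat -> R) N : forall M lam x, (N < M)%N ->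
  \sum_(m < M) Cb lam m * Dd m (pf a N) x = pf a N (x + lam).
Proof.
elim: N => [|N IH] [|M] lam x //= HM.
  rewrite big_ord_recl Cb0 /= big1 ?addr0.
    by rewrite /pf !big_ord0 mul1r.
  move=> i _; rewrite /bump /= add1n.
  rewrite -[RHS](mulr0 (Cb lam i.+1)) -(D_const _ i 1 x) /=.
  congr (_ * _); apply: D_ext => z; by rewrite /pf !big_ord0.
rewrite big_ord_recl Cb0 mul1r.
have E : forall i : 'I_M, Cb lam i.+1 * Dd i.+1 (pf a N.+1) x =
   (x - a N) * (Cb lam i.+1 * Dd i.+1 (pf a N) x) + lam * (Cb (lam - 1) i * Dd i (pf a N) (x + 1)).
  move=> i.
  have -> : Dd i.+1 (pf a N.+1) x =
   Dd i.+1 (fun z => pf a N z * (z - a N)) x by apply: D_ext => z; rewrite !pfS.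
  rewrite D_leib [lam * _]mulrA -CbS /=; ring.
rewrite (eq_bigr _ (fun i _ => E i)) big_split /= -!mulr_sumr.
rewrite IH; last by [].
have -> : \sum_(i < M) Cb lam i.+1 * Dd i.+1 (pf a N) x =
   \sum_(i < M.+1) Cb lam i * Dd i (pf a N) x - pf a N x.
  by rewrite big_ord_recl Cb0 mul1r /=; ring.
rewrite IH; last by apply: ltnW.
rewrite pfS; have -> : x + 1 + (lam - 1) = x + lam by ring.
rewrite pfS; ring.
Qed.
Lemma fallSl (R : realType) (y : R) n : fall y n.+1 = y * fall (y - 1) n.
Proof.
rewrite /fall big_ord_recl subr0; congr (_ * _); apply: eq_bigr => i _.
rewrite /bump /= -natr1; ring.
Qed.

Lemma fallSr (R : realType) (y : R) n : fall y n.+1 = fall y n * (y - n%:R).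
Proof. by rewrite /fall big_ord_recr. Qed.

Lemma fall_nat (R : realType) n j : fall (n%:R : R) j = (n ^_ j)%:R.
Proof.
elim: j => [|j IH]; first by rewrite /fall big_ord0 ffactn0.
rewrite fallSr IH ffactnSr natrM.
case: (leqP j n) => H; first by rewrite natrB.
by rewrite ffact_small // !mul0r.
Qed.

Lemma D_fall (R : realType) m n (y : R) :
  Dd m (fun z => fall z n) y = fall (n%:R) m * fall y (n - m).
Proof.
elim: m n y => [|m IH] n y.
  by rewrite /= /fall big_ord0 mul1r subn0.
case: n => [|n] /=.
  rewrite fallSl mul0r mul0r -(D_zero _ m y); apply: D_ext => z.
  by rewrite /fall !big_ord0 subrr.
rewrite -[RHS]/(fall (n.+1%:R) m.+1 * fall y (n - m)).
have -> : Dd m (fun y0 => fall (y0 + 1) n.+1 - fall y0 n.+1) y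
   = Dd m (fun z => n.+1%:R * fall z n) y.
  apply: D_ext => z; rewrite fallSl fallSr addrK -natr1; ring.
rewrite D_scale IH fallSl -natr1 addrK; ring.
Qed.

Definition Ad {R : realType} (lam a : R) k := dfall a lam k / (k`!)%:R.

Lemma AdS (R : realType) (lam a : R) k :
  Ad lam a k.+1 * k.+1%:R = Ad lam a k * (a - k%:R * lam).
Proof.
rewrite /Ad /dfall big_ord_recr /= factS natrM.
have := fact_neq0 R k; have : k.+1%:R != 0 :> R by rewrite pnatr_eq0.
move=> H1 H2; field; rewrite ?H1 ?H2 //=.
by rewrite -natr1 addrC in H1.
Qed.

Lemma Ad0 (R : realType) (lam a : R) : Ad lam a 0 = 1.
Proof. by rewrite /Ad /dfall big_ord0 fact0 divr1. Qed.

Lemma vand (R : realType) (lam : R) N : forall a b,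
  \sum_(k < N.+1) Ad lam a k * Ad lam b (N - k) = Ad lam (a + b) N.
Proof.
elim: N => [|N IH] a b.
  by rewrite big_ord_recl big_ord0 !Ad0 addr0 mul1r.
have HN : N.+1%:R != 0 :> R by rewrite pnatr_eq0.
apply: (mulIf HN); rewrite AdS -IH [RHS]mulr_suml.
have E1 : forall k : 'I_N.+1, Ad lam a k * Ad lam b (N - k) * (a + b - N%:R * lam)
   = Ad lam a k.+1 * k.+1%:R * Ad lam b (N - k) + Ad lam a k * (Ad lam b (N - k).+1 * (N - k).+1%:R).
  move=> k; rewrite !AdS natrB; last by rewrite -ltnS ltn_ord.
  ring.
rewrite (eq_bigr _ (fun k _ => E1 k)) big_split /=.
have E2 : forall k : 'I_N.+2, Ad lam a k * Ad lam b (N.+1 - k) * N.+1%:R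
   = k%:R * (Ad lam a k * Ad lam b (N.+1 - k)) + (N.+1 - k)%:R * (Ad lam a k * Ad lam b (N.+1 - k)).
  move=> k; rewrite -mulrDl -natrD subnKC; last by rewrite -ltnS ltn_ord.
  ring.
rewrite mulr_suml (eq_bigr _ (fun k _ => E2 k)) big_split /=.
rewrite big_ord_recl [X in _ + X]big_ord_recr /= subnn !mulr0n !mul0r add0r addr0.
congr (_ + _); apply: eq_bigr => k _.
  rewrite /bump /= add1n subSS; ring.
rewrite subSn; last by rewrite -ltnS ltn_ord.
ring.
Qed.
Definition Lf {R : realType} (lam x : R) (M : nat) (f : R -> R) : R :=
  \sum_(j < M) (Cb lam j.+1 / lam) * Dd j f x.

Lemma L_ext (R : realType) (lam x : R) M (f g : R -> R) :
  (forall y, f y = g y) -> Lf lam x M f = Lf lam x M g.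
Proof. move=> H; apply: eq_bigr => j _; by rewrite (D_ext _ _ _ _ H). Qed.

Lemma L_lin (R : realType) (lam x : R) M K (c : nat -> R) (F : nat -> R -> R) :
  Lf lam x M (fun y => \sum_(k < K) c k * F k y) = \sum_(k < K) c k * Lf lam x M (F k).
Proof.
rewrite /Lf; under eq_bigr do rewrite D_lin mulr_sumr.
rewrite exchange_big /=; apply: eq_bigr => k _; rewrite mulr_sumr.
apply: eq_bigr => j _; ring.
Qed.

Definition bb {R : realType} (lam x : R) k := Lf lam x k.+1 (fun y => dfall y lam k).

Lemma L_indep (R : realType) (lam x : R) M k : (k < M)%N ->
  Lf lam x M (fun y => dfall y lam k) = bb lam x k.
Proof.
move=> H; rewrite /bb /Lf.
rewrite [RHS](big_ord_widen M (fun j : nat => Cb lam j.+1 / lam * Dd j (fun y => dfall y lam k) x) H) big_mkcond /=.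
rewrite [RHS]big_mkcond /=.
apply: eq_bigr => j _; case: ifP => // /negbT; rewrite -leqNgt => Hj.
have -> : Dd j (fun y => dfall y lam k) x = Dd j (pf (fun i => i%:R * lam) k) x by [].
by rewrite D_high ?mulr0.
Qed.
Lemma em1_sum (R : realType) (lam y : R) N :
  \sum_(k < N.+1) (em1_coef lam (N - k) / (k`!)%:R) * dfall y lam k
  = (dfall (y + 1) lam N - dfall y lam N) / (N`!)%:R.
Proof.
rewrite mulrBl -[dfall (y + 1) lam N / _]/(Ad lam (y + 1) N) -(vand _ lam N y 1).
rewrite big_ord_recr [X in _ = X - _]big_ord_recr /= subnn.
rewrite /em1_coef eqxx !mul0r addr0 Ad0 mulr1 {2}/Ad addrK.
apply: eq_bigr => k _.
have Hk : (N - k)%N == 0%N = false by apply/negbTE; rewrite subn_eq0 -ltnNge ltn_ord.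
rewrite Hk; rewrite /Ad; ring.
Qed.

Lemma dfallSl (R : realType) (y lam : R) m :
  dfall (y + lam) lam m.+1 = (y + lam) * dfall y lam m.
Proof.
rewrite /dfall big_ord_recl mul0r subr0; congr (_ * _); apply: eq_bigr => i _.
rewrite /bump /= -natr1; ring.
Qed.

Lemma bb_rec (R : realType) (lam x : R) : lam != 0 -> degBernoulli_gf lam x (bb lam x).
Proof.
move=> Hl N.
have -> : \sum_(k < N.+1) (bb lam x k / (k`!)%:R) * em1_coef lam (N - k)
  = \sum_(k < N.+1) (em1_coef lam (N - k) / (k`!)%:R) * Lf lam x N.+1 (fun y => dfall y lam k).
  by apply: eq_bigr => k _; rewrite L_indep //; ring.
rewrite -(L_lin _ lam x N.+1 N.+1 (fun k => em1_coef lam (N - k) / (k`!)%:R) (fun k y => dfall y lam k)).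
rewrite (L_ext _ _ _ _ _ _ (fun y => em1_sum _ lam y N)).
have E : forall y, (dfall (y + 1) lam N - dfall y lam N) / (N`!)%:R
  = \sum_(k < 1) (fun _ => (N`!)%:R^-1) k * (fun _ y => dfall (y + 1) lam N - dfall y lam N) k y.
  by move=> y; rewrite big_ord1 mulrC.
rewrite (L_ext _ _ _ _ _ _ E) (L_lin _ lam x N.+1 1 (fun _ => (N`!)%:R^-1) (fun _ y => dfall (y + 1) lam N - dfall y lam N)) big_ord1 /Lf.
have := newton _ (fun i => i%:R * lam) N N.+2 lam x (leqW (ltnSn N)).
rewrite big_ord_recl Cb0 mul1r => HN.
have -> : \sum_(j < N.+1) Cb lam j.+1 / lam *
      Dd j (fun y => dfall (y + 1) lam N - dfall y lam N) x
   = lam^-1 * \sum_(i < N.+1) Cb lam (bump 0 i) * Dd (bump 0 i) (pf (fun i => i%:R * lam) N) x.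
  rewrite mulr_sumr; apply: eq_bigr => j _; rewrite /bump /= add1n; ring.
have -> : \sum_(i < N.+1) Cb lam (bump 0 i) * Dd (bump 0 i) (pf (fun i => i%:R * lam) N) x
   = pf (fun i => i%:R * lam) N (x + lam) - Dd 0 (pf (fun i => i%:R * lam) N) x.
  by rewrite -HN; ring.
rewrite /= /pf -/(dfall (x + lam) lam N) -/(dfall x lam N).
clear E; case: N HN => [|m] _.
  by rewrite /dfall !big_ord0 subrr !mulr0.
rewrite dfallSl {2}/dfall big_ord_recr /= -/(dfall x lam m) factS natrM.
have := fact_neq0 R m; have : m.+1%:R != 0 :> R by rewrite pnatr_eq0.
move=> H1 H2; rewrite -natr1; field.
rewrite -natr1 addrC in H1.
by rewrite H2 Hl addrC H1.
Qed.
Lemma gf_unique (R : realType) (lam x : R) (b b' : nat -> R) :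
  degBernoulli_gf lam x b -> degBernoulli_gf lam x b' -> forall k, b k = b' k.
Proof.
move=> Hb Hb' k; elim/ltn_ind: k => k IH.
have := Hb k.+1; rewrite -(Hb' k.+1) => /eqP; rewrite -subr_eq0 -sumrB.
rewrite big_ord_recr /= subnn /em1_coef eqxx !mulr0 subrr addr0.
rewrite big_ord_recr /= subSnn /=.
rewrite big1 ?add0r; last first.
  move=> j _; rewrite IH ?subrr //.
have -> : dfall (1 : R) lam 1 = 1 by rewrite /dfall big_ord1 /= mul0r subr0.
rewrite [(1`!)%:R]/(1%:R) divr1 !mulr1 subr_eq0 => /eqP E.
have H := fact_neq0 R k; exact: (mulIf (invr_neq0 H) E).
Qed.

Lemma prodcM (R : realType) (c : R) (F : nat -> R) m :
  \prod_(i < m) (c * F i) = c ^+ m * \prod_(i < m) F i.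
Proof.
elim: m => [|m IH]; first by rewrite !big_ord0 expr0 mulr1.
by rewrite !big_ord_recr IH exprSr /=; ring.
Qed.

Lemma dfall_scale (R : realType) (lam : R) m : lam != 0 ->
  dfall lam 1 m = lam ^+ m * dfall 1 lam^-1 m.
Proof.
move=> Hl; rewrite /dfall.
have -> : \prod_(i < m) (lam - i%:R * 1) = \prod_(i < m) (lam * (1 - i%:R * lam^-1)).
  by apply: eq_bigr => i _; rewrite mulrBr mulr1 mulrCA divff // !mulr1.

exact: (prodcM _ lam (fun j : nat => 1 - j%:R / lam) m).
Qed.

Theorem theorem6 (R : realType) (lam x : R) (b : nat -> R) (S1 : nat -> nat -> R) :
  lam != 0 ->
  degBernoulli_gf lam x b ->
  degStirling1 lam S1 ->
  forall n : nat,
    \sum_(k < n.+1) b k * S1 n k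
    = (n`!)%:R * \sum_(k < n.+1)
        (fall x k / (k`!)%:R) *
        (lam ^+ (n - k) * dfall 1 lam^-1 (n - k).+1 / ((n - k).+1`!)%:R).
Proof.
move=> Hl Hb HS n.
have Hbb := bb_rec _ lam x Hl.
have -> : \sum_(k < n.+1) b k * S1 n k
   = \sum_(k < n.+1) S1 n k * Lf lam x n.+1 (fun y => dfall y lam k).
  apply: eq_bigr => k _; rewrite (gf_unique _ _ _ _ _ Hb Hbb) L_indep //; ring.
rewrite -(L_lin _ lam x n.+1 n.+1 (S1 n) (fun k y => dfall y lam k)).
rewrite (L_ext _ _ _ _ _ (fun y => fall y n)); last by move=> y; rewrite HS.
rewrite /Lf (reindex_inj rev_ord_inj) /= mulr_sumr.
apply: eq_bigr => k _.
rewrite D_fall subSS subKn; last by rewrite -ltnS ltn_ord.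
have Hk : (n - k <= n)%N by apply: leq_subr.
rewrite fall_nat -(ffact_fact Hk) subKn; last by rewrite -ltnS ltn_ord.
rewrite [(n ^_ _ * _)%:R]natrM.
rewrite /Cb dfall_scale // exprS.
have := fact_neq0 R k; have := fact_neq0 R (n - k).+1 => H1 H2.
field.
by rewrite H1 H2 Hl.
Qed.
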